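(* Let $R$ be a finite commutative ring with identity such that every residue field $R/\mathfrak{m}$, $\mathfrak{m}\in\mathrm{Max}(R)$, has odd characteristic. Then $$\chi\big(\mathrm{Reg}(\Gamma(R))\big)=\omega\big(\mathrm{Reg}(\Gamma(R))\big)=2^{|\mathrm{Max}(R)|}.$$
   Context: $Z(R)$ is the set of zero-divisors of $R$ (including $0$), $\mathrm{Reg}(R)=R\setminus Z(R)$ the set of regular elements, and $\mathrm{Max}(R)$ the set of maximal ideals. The total graph $T(\Gamma(R))$ is the simple graph with vertex set $R$ in which distinct $x,y$ are adjacent iff $x+y\in Z(R)$; $\mathrm{Reg}(\Gamma(R))$ is its induced subgraph on $\mathrm{Reg}(R)$. $\chi$ and $\omega$ denote chromatic and clique number. *)

(* Defs.v *)
From mathcomp Require Import all_boot all_order all_algebra.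
Set Implicit Arguments. Unset Strict Implicit. Unset Printing Implicit Defensive.
Import GRing.Theory.
Local Open Scope ring_scope.

Section RingGraph.
Variable R : finComNzRingType.

(* Z(R): zero-divisors, including 0 *)
Definition zdiv (x : R) : bool := [exists y : R, (y != 0) && (x * y == 0)].
Definition regular (x : R) : bool := ~~ zdiv x.

Definition is_ideal (I : {set R}) : bool :=
  [&& 0 \in I,
      [forall x, forall y, (x \in I) && (y \in I) ==> (x - y \in I)] &
      [forall r, forall x, (x \in I) ==> (r * x \in I)]].

Definition is_maximal_ideal (I : {set R}) : bool :=
  [&& is_ideal I, (1 \notin I) &
      [forall J : {set R}, is_ideal J && (I \subset J) ==> (J == I) || (1 \in J)]].

Definition MaxR : {set {set R}} := [set I | is_maximal_ideal I].

(* p is the characteristic of R/m: least p > 0 with p*1 = 0 in R/m, i.e. p%:R \in m *)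
Definition is_residue_char (m : {set R}) (p : nat) : Prop :=
  [/\ (0 < p)%N, p%:R \in m & forall k, (0 < k < p)%N -> k%:R \notin m].

(* adjacency in Reg(Gamma(R)) (the induced subgraph of the total graph on Reg(R)) *)
Definition reg_adj (x y : R) : bool :=
  [&& regular x, regular y, x != y & zdiv (x + y)].

Definition proper_coloring (k : nat) (f : {ffun R -> 'I_k}) : bool :=
  [forall x, forall y, reg_adj x y ==> (f x != f y)].

Definition colorable (k : nat) : bool :=
  [exists f : {ffun R -> 'I_k}, proper_coloring f].

Lemma colorable_exists : exists k, colorable k.
Proof.
exists #|R|; apply/existsP; exists [ffun x => enum_rank x].
apply/forallP => x; apply/forallP => y; apply/implyP => /and4P [_ _ nxy _].
by rewrite !ffunE; apply: contra nxy => /eqP /enum_rank_inj ->.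
Qed.

Definition chi_reg : nat := ex_minn colorable_exists.

Definition is_clique (S : {set R}) : bool :=
  [forall x in S, regular x] &&
  [forall x in S, forall y in S, (x != y) ==> reg_adj x y].

Definition omega_reg : nat := \max_(S : {set R} | is_clique S) #|S|.

End RingGraph.

(* Main.v *)
Require Import Defs.
From mathcomp Require Import all_boot all_order all_algebra.
From mathcomp Require Import ring.
Set Implicit Arguments. Unset Strict Implicit. Unset Printing Implicit Defensive.
Import GRing.Theory.
Local Open Scope ring_scope.

Section Proof.
Variable R : finComNzRingType.
Implicit Types (x y z : R) (I m : {set R}).

Lemma idealP I : is_ideal I ->
  [/\ 0 \in I, forall x y, x \in I -> y \in I -> x - y \in I &
      forall r x, x \in I -> r * x \in I].
Proof.
case/and3P=> I0 /forallP HB /forallP HM; split=> //.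
- by move=> x y xI yI; have/forallP/(_ y)/implyP := HB x; apply; rewrite xI.
- by move=> r x xI; have/forallP/(_ x)/implyP := HM r; apply.
Qed.

Lemma idealI I : 0 \in I -> (forall x y, x \in I -> y \in I -> x - y \in I) ->
  (forall r x, x \in I -> r * x \in I) -> is_ideal I.
Proof.
move=> h0 hB hM; apply/and3P; split=> //.
  by apply/forallP=> x; apply/forallP=> y; apply/implyP=> /andP[]; apply: hB.
by apply/forallP=> r; apply/forallP=> x; apply/implyP; apply: hM.
Qed.

Lemma ideal0 I : is_ideal I -> 0 \in I. Proof. by case/idealP. Qed.
Lemma idealB I x y : is_ideal I -> x \in I -> y \in I -> x - y \in I.
Proof. by case/idealP=> _ h _; apply: h. Qed.
Lemma idealMl I r x : is_ideal I -> x \in I -> r * x \in I.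
Proof. by case/idealP=> _ _ h; apply: h. Qed.
Lemma idealMr I r x : is_ideal I -> x \in I -> x * r \in I.
Proof. by rewrite mulrC; apply: idealMl. Qed.
Lemma idealN I x : is_ideal I -> x \in I -> - x \in I.
Proof. by move=> hI xI; rewrite -sub0r idealB ?ideal0. Qed.
Lemma idealD I x y : is_ideal I -> x \in I -> y \in I -> x + y \in I.
Proof. by move=> hI xI yI; rewrite -[y]opprK idealB ?idealN. Qed.

Lemma maxP m : m \in MaxR R -> [/\ is_ideal m, 1 \notin m &
   forall J, is_ideal J -> m \subset J -> J = m \/ 1 \in J].
Proof.
rewrite inE => /and3P[hI n1 /forallP H]; split=> // J hJ sJ.
by move: (H J); rewrite hJ sJ /= => /orP[/eqP->|->]; [left|right].
Qed.

Lemma reg_inv x : regular x -> exists u, x * u = 1.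
Proof.
move=> rx.
have inj : injective (fun y => x * y).
  move=> y z /eqP; rewrite -subr_eq0 -mulrBr => /eqP e.
  apply/eqP; rewrite -subr_eq0; apply/negPn/negP => nz.
  by move/negP: rx; apply; apply/existsP; exists (y - z); rewrite nz e eqxx.
by exists (invF inj 1); apply: (f_invF inj).
Qed.

Lemma inv_reg x u : x * u = 1 -> regular x.
Proof.
move=> xu; apply/negP => /existsP[y /andP[nz /eqP xy]].
by move/eqP: nz; apply; rewrite -[y]mulr1 -xu mulrA [y * x]mulrC xy mul0r.
Qed.

Lemma max_zdiv m z : m \in MaxR R -> z \in m -> zdiv z.
Proof.
move=> mM zm; have [hm n1 _] := maxP mM; apply: contraT => /reg_inv [u zu].
by rewrite -zu idealMr in n1.
Qed.

Lemma zdiv_max x : zdiv x -> exists2 m, m \in MaxR R & x \in m.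
Proof.
move=> zx.
pose I0 := [set z | [exists r, z == x * r]].
have xI0 : x \in I0 by rewrite inE; apply/existsP; exists 1; rewrite mulr1.
have hI0 : is_ideal I0.
  apply: idealI.
  - by rewrite inE; apply/existsP; exists 0; rewrite mulr0.
  - move=> a b; rewrite !inE => /existsP[r /eqP->] /existsP[s /eqP->].
    by apply/existsP; exists (r - s); rewrite mulrBr.
  - move=> r a; rewrite !inE => /existsP[s /eqP->].
    by apply/existsP; exists (r * s); rewrite mulrCA.
have n1 : 1 \notin I0.
  apply/negP; rewrite inE => /existsP[r /eqP e].
  by move: (inv_reg (esym e)); rewrite /regular zx.
pose P J := [&& is_ideal J, I0 \subset J & 1 \notin J].
have PI0 : P I0 by rewrite /P hI0 subxx n1.
case: (@arg_maxnP _ _ P (fun J : {set R} => #|J|) PI0) => J /and3P[hJ sJ nJ] Jmax.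
exists J; last by apply: (subsetP sJ).
rewrite inE /is_maximal_ideal hJ nJ /=; apply/forallP => K; apply/implyP => /andP[hK sK].
case: (boolP (1 \in K)) => [//|nK]; first by rewrite orbT.
have PK : P K by rewrite /P hK nK (subset_trans sJ sK).
by rewrite orbF eq_sym eqEcard sK; exact: (Jmax _ PK).
Qed.


Definition rep m x : R := odflt x [pick z | z - x \in m].

Lemma repP m x : is_ideal m -> rep m x - x \in m.
Proof.
move=> hm; rewrite /rep; case: pickP => [z zP //|H] /=.
by rewrite subrr ideal0.
Qed.

Lemma rep_eq m x x' : is_ideal m -> x - x' \in m -> rep m x = rep m x'.
Proof.
move=> hm d.
have e : (fun z => z - x \in m) =1 (fun z => z - x' \in m).
  move=> z /=; apply/idP/idP => h.
    have -> : z - x' = (z - x) + (x - x') by ring.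
    by rewrite idealD.
  have -> : z - x = (z - x') - (x - x') by ring.
  by rewrite idealB.
rewrite /rep (eq_pick e); case: pickP => //= H.
by move: (H x'); rewrite subrr ideal0.
Qed.

Definition sgn m x : bool := (enum_rank (rep m x) < enum_rank (rep m (- x)))%N.

Lemma comax m m' : m \in MaxR R -> m' \in MaxR R -> m != m' ->
  exists b, (b \in m') && (1 - b \in m).
Proof.
move=> mM m'M nmm.
have [hm n1 mmax] := maxP mM; have [hm' n1' m'max] := maxP m'M.
pose J := [set z | [exists a, exists c, [&& a \in m, c \in m' & z == a + c]]].
have hJ : is_ideal J.
  apply: idealI.
  - rewrite inE; apply/existsP; exists 0; apply/existsP; exists 0.
    by rewrite (ideal0 hm) (ideal0 hm') addr0 eqxx.
  - move=> u v; rewrite !inE => /existsP[a /existsP[c /and3P[am cm /eqP->]]].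
    move=> /existsP[a' /existsP[c' /and3P[am' cm' /eqP->]]].
    apply/existsP; exists (a - a'); apply/existsP; exists (c - c').
    by rewrite (idealB hm) ?(idealB hm') //=; apply/eqP; ring.
  - move=> r u; rewrite !inE => /existsP[a /existsP[c /and3P[am cm /eqP->]]].
    apply/existsP; exists (r * a); apply/existsP; exists (r * c).
    by rewrite (idealMl _ hm) ?(idealMl _ hm') //=; apply/eqP; ring.
have sJ : m \subset J.
  apply/subsetP => z zm; rewrite inE; apply/existsP; exists z; apply/existsP.
  by exists 0; rewrite zm (ideal0 hm') addr0 eqxx.
have s'J : m' \subset J.
  apply/subsetP => z zm; rewrite inE; apply/existsP; exists 0; apply/existsP.
  by exists z; rewrite zm (ideal0 hm) add0r eqxx.
case: (mmax J hJ sJ) => [eJ|].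
  rewrite eJ in s'J; case: (m'max m hm s'J) => [e|m1].
    by rewrite e eqxx in nmm.
  by rewrite m1 in n1.
rewrite inE => /existsP[a /existsP[c /and3P[am cm /eqP e]]].
exists c; rewrite cm /=.
have -> : 1 - c = a by rewrite e; ring.
by [].
Qed.


Hypothesis hodd : forall (m : {set R}) (p : nat),
  m \in MaxR R -> is_residue_char m p -> odd p.

Lemma two_notin m : m \in MaxR R -> 2%:R \notin m.
Proof.
move=> mM; apply/negP => m2; have [_ n1 _] := maxP mM.
suff: odd 2 by [].
apply: (hodd mM); split=> // k /andP[k0 k2].
by have -> : k = 1%N by case: k k0 k2 => [|[|]].
Qed.

Lemma unit_notin m x u : m \in MaxR R -> x * u = 1 -> x \notin m.
Proof.
move=> mM xu; have [hm n1 _] := maxP mM; apply/negP => xm.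
by rewrite -xu (idealMr _ hm xm) in n1.
Qed.

Lemma twox_notin m x : m \in MaxR R -> regular x -> 2%:R * x \notin m.
Proof.
move=> mM rx; have [hm _ _] := maxP mM; have [u xu] := reg_inv rx.
apply/negP => m2x; move/negP: (two_notin mM); apply.
have -> : 2%:R = 2%:R * x * u :> R by rewrite -mulrA xu mulr1.
exact: (idealMr _ hm m2x).
Qed.

Lemma sgn_adj m x y : m \in MaxR R -> regular x -> x + y \in m ->
  sgn m x != sgn m y.
Proof.
move=> mM rx xy; have [hm _ _] := maxP mM.
have e1 : rep m y = rep m (- x).
  by apply: rep_eq => //; have -> : y - - x = x + y by ring.
have e2 : rep m (- y) = rep m x.
  apply: rep_eq => //; have -> : - y - x = - (x + y) by ring.
  exact: idealN.
have ne : rep m x != rep m (- x).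
  apply/negP => /eqP e.
  have h1 := repP x hm; have h2 := repP (- x) hm; rewrite -e in h2.
  have := idealB hm h2 h1.
  have -> : rep m x - - x - (rep m x - x) = 2%:R * x by ring.
  by apply/negP; apply: twox_notin.
rewrite /sgn e1 e2.
move: ne; rewrite -(inj_eq enum_rank_inj) -(inj_eq val_inj) /=.
set a := val _; set b := val _.
by case: ltngtP.
Qed.


Lemma eqP_neq_sym (a b : {set R}) : a != b -> b != a.
Proof. by rewrite eq_sym. Qed.

Definition bb m m' : R := odflt 0 [pick b | (b \in m') && (1 - b \in m)].

Lemma bbP m m' : m \in MaxR R -> m' \in MaxR R -> m != m' ->
  (bb m m' \in m') && (1 - bb m m' \in m).
Proof.
move=> mM m'M nmm; rewrite /bb; case: pickP => [b -> //|H] /=.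
by have [b] := comax mM m'M nmm; rewrite H.
Qed.

Definition ee m : R := \prod_(m' in MaxR R | m' != m) bb m m'.

Lemma ee1 m : m \in MaxR R -> ee m - 1 \in m.
Proof.
move=> mM; have [hm _ _] := maxP mM; rewrite /ee.
apply: (big_ind (fun u => u - 1 \in m)).
- by rewrite subrr ideal0.
- move=> u v hu hv.
  have -> : u * v - 1 = u * (v - 1) + (u - 1) by ring.
  by rewrite idealD // idealMl.
- move=> m' /andP[m'M nm'].
  have /andP[_ h] := bbP mM m'M (eqP_neq_sym nm').
  have -> : bb m m' - 1 = - (1 - bb m m') by ring.
  exact: idealN.
Qed.


Lemma ee_in m m' : m \in MaxR R -> m' \in MaxR R -> m' != m -> ee m \in m'.
Proof.
move=> mM m'M nm; have [hm' _ _] := maxP m'M.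
rewrite /ee (bigD1 m') /=; last by rewrite m'M.
apply: idealMr => //.
by have /andP[] := bbP mM m'M (eqP_neq_sym nm).
Qed.

Local Notation C := {ffun 'I_#|MaxR R| -> bool}.
Definition sg (b : bool) : R := if b then 1 else -1.
Definition xc (c : C) : R := \sum_(i < #|MaxR R|) sg (c i) * ee (enum_val i).

Lemma xcP c i : xc c - sg (c i) \in enum_val i.
Proof.
have mM : enum_val i \in MaxR R := enum_valP i.
have [hm _ _] := maxP mM.
rewrite /xc (bigD1 i) //=.
set S := \sum_(j | _) _.
have -> : sg (c i) * ee (enum_val i) + S - sg (c i)
   = sg (c i) * (ee (enum_val i) - 1) + S by ring.
apply: (idealD hm); first exact: (idealMl _ hm (ee1 mM)).
apply: (big_ind (fun u => u \in enum_val i)).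
- exact: ideal0.
- by move=> u v; apply: idealD.
- move=> j nji; apply: idealMl => //; apply: ee_in => //; first exact: enum_valP.
  by apply: contra nji => /eqP/enum_val_inj ->.
Qed.

Lemma sg_notin m b : m \in MaxR R -> sg b \notin m.
Proof.
move=> mM; have [hm n1 _] := maxP mM; case: b => //=.
by apply/negP => /(idealN hm); rewrite opprK; apply/negP.
Qed.

Lemma xc_reg c : regular (xc c).
Proof.
apply/negP => /zdiv_max [m mM xm]; have [hm _ _] := maxP mM.
pose i := enum_rank_in mM m.
have ei : enum_val i = m by rewrite /i enum_rankK_in.
have := xcP c i; rewrite ei => h.
have := idealB hm xm h; rewrite opprB addrC subrK.
by apply/negP; apply: sg_notin.
Qed.

Lemma xc_adj c c' : c != c' -> reg_adj (xc c) (xc c').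
Proof.
move=> ncc; have : [exists i, c i != c' i].
  by move: ncc; apply: contraR => /existsPn H; apply/eqP/ffunP => i; apply/eqP/negPn/H.
case/existsP => i nci.
have mM : enum_val i \in MaxR R := enum_valP i.
have [hm _ _] := maxP mM.
have h1 := xcP c i; have h2 := xcP c' i.
rewrite /reg_adj !xc_reg /=; apply/andP; split.
  apply/negP => /eqP e; rewrite e in h1.
  have := idealB hm h2 h1.
  have -> : xc c' - sg (c' i) - (xc c' - sg (c i)) = sg (c i) - sg (c' i) by ring.
  move: nci; case: (c i); case: (c' i) => //= _.
    have -> : (1 : R) - -1 = 2%:R by ring.
    by apply/negP; apply: two_notin.
  move/(idealN hm); have -> : - (-1 - 1) = 2%:R :> R by ring.
  by apply/negP; apply: two_notin.
apply: (max_zdiv mM).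
have := idealD hm h1 h2.
have -> : xc c - sg (c i) + (xc c' - sg (c' i))
   = xc c + xc c' - (sg (c i) + sg (c' i)) by ring.
by move: nci; case: (c i); case: (c' i) => //= _; rewrite ?subrr ?addNr ?subr0.
Qed.

Definition col x : C := [ffun i => sgn (enum_val i) x].

Lemma col_adj x y : reg_adj x y -> col x != col y.
Proof.
case/and4P=> rx ry nxy /zdiv_max [m mM xym].
pose i := enum_rank_in mM m.
have ei : enum_val i = m by rewrite /i enum_rankK_in.
apply/negP => /eqP e.
have : col x i = col y i by rewrite e.
rewrite !ffunE ei => h; move: (sgn_adj mM rx xym); by rewrite h eqxx.
Qed.


Lemma card_C : #|C| = (2 ^ #|MaxR R|)%N.
Proof. by rewrite card_ffun card_bool card_ord. Qed.

Lemma colorable_top : colorable R (2 ^ #|MaxR R|).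
Proof.
apply/existsP; exists [ffun x => cast_ord card_C (enum_rank (col x))].
apply/forallP => x; apply/forallP => y; apply/implyP => adj.
rewrite !ffunE (inj_eq (@cast_ord_inj _ _ _)) (inj_eq (@enum_rank_inj _)).
exact: col_adj.
Qed.

Lemma clique_le k (f : {ffun R -> 'I_k}) S :
  proper_coloring f -> is_clique (R:=R) S -> (#|S| <= k)%N.
Proof.
move=> /forallP pf /andP[_ /forallP cl].
have inj : {in S &, injective f}.
  move=> x y xS yS e; apply/eqP; apply: contraT => nxy.
  move: (cl x); rewrite xS /= => /forallP/(_ y); rewrite yS nxy /= => adj.
  by move: (pf x) => /forallP/(_ y); rewrite adj e eqxx.
rewrite -(card_in_imset inj).
by apply: leq_trans (max_card _) _; rewrite card_ord.
Qed.

Definition S0 : {set R} := [set xc c | c : C].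

Lemma xc_inj : injective xc.
Proof.
move=> c c' e; apply/eqP; apply: contraT => ncc.
by move: (xc_adj ncc); rewrite e /reg_adj eqxx /= !andbF.
Qed.

Lemma card_S0 : #|S0| = (2 ^ #|MaxR R|)%N.
Proof. by rewrite card_imset ?card_C //; exact: xc_inj. Qed.

Lemma clique_S0 : is_clique (R:=R) S0.
Proof.
apply/andP; split.
  by apply/forallP => x; apply/implyP => /imsetP[c _ ->]; apply: xc_reg.
apply/forallP => x; apply/implyP => /imsetP[c _ ->].
apply/forallP => y; apply/implyP => /imsetP[c' _ ->].
apply/implyP => ne; apply: xc_adj; apply: contra ne => /eqP->; exact: eqxx.
Qed.

End Proof.

Theorem corollary16 (R : finComNzRingType) :
  (forall (m : {set R}) (p : nat), m \in MaxR R -> is_residue_char m p -> odd p) ->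
  chi_reg R = (2 ^ #|MaxR R|)%N /\ omega_reg R = (2 ^ #|MaxR R|)%N.
Proof.
move=> hodd; split.
  rewrite /chi_reg; case: ex_minnP => k /existsP[f pf] kmin.
  apply/eqP; rewrite eqn_leq kmin ?colorable_top //=.
  by rewrite -(card_S0 hodd); apply: (clique_le pf (clique_S0 hodd)).
apply/eqP; rewrite eqn_leq; apply/andP; split.
  apply/bigmax_leqP => S cS.
  have /existsP[f pf] := colorable_top hodd.
  exact: clique_le pf cS.
by rewrite -(card_S0 hodd); apply: (leq_bigmax_cond _ (clique_S0 hodd)).
Qed.
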